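(* Let $\gamma>0$, $\mu\ge0$, and $$q_\mu(r,t)=\int_0^\infty p(r,s)\,p_\mu(s,t)\,ds,\qquad p(r,s)=\frac{2r^{\gamma-1}e^{-r^2/(2s)}}{(2s)^{\gamma/2}\Gamma(\gamma/2)},\quad p_\mu(s,t)=\frac{t\,e^{-(t-\mu s)^2/(2s)}}{\sqrt{2\pi s^3}},$$ which is the density of $R^\gamma(T^\mu_t)$ ($R^\gamma$ a $\gamma$-dimensional Bessel process from $0$, $T^\mu_t$ the first passage time to level $t$ of an independent Brownian motion with drift $\mu$). Then $$\left(2\mu\frac{\partial}{\partial t}-\frac{\partial^2}{\partial t^2}\right)q_\mu=\left(\frac{\partial^2}{\partial r^2}-(\gamma-1)\frac{\partial}{\partial r}\frac1r\right)q_\mu,\qquad r,t>0.$$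
   Context: The operator $\frac{\partial}{\partial r}\frac1r$ means $f\mapsto\frac{\partial}{\partial r}\left(\frac fr\right)$. *)

(* Defs.v *)
From Stdlib Require Import Reals.
From Coquelicot Require Import Coquelicot.
Open Scope R_scope.

Definition Gamma_fn (x : R) : R :=
  RInt_gen (fun s => Rpower s (x - 1) * exp (- s))
           (at_right 0) (Rbar_locally p_infty).

Definition p_bessel (g r s : R) : R :=
  2 * Rpower r (g - 1) * exp (- (r ^ 2) / (2 * s))
    / (Rpower (2 * s) (g / 2) * Gamma_fn (g / 2)).

Definition p_fpt (mu s t : R) : R :=
  t * exp (- ((t - mu * s) ^ 2) / (2 * s)) / sqrt (2 * PI * s ^ 3).

Definition q_mu (g mu r t : R) : R :=
  RInt_gen (fun s => p_bessel g r s * p_fpt mu s t)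
           (at_right 0) (Rbar_locally p_infty).

(* Main.v *)
Require Import Defs.
From Stdlib Require Import Reals Lra Lia Psatz.
From Coquelicot Require Import Coquelicot.
Open Scope R_scope.

Lemma ex_RInt_pos (f : R -> R) x y :
  (forall z, 0 < z -> continuous f z) -> 0 < x -> 0 < y -> ex_RInt f x y.
Proof.
  intros Hc Hx Hy. apply (ex_RInt_continuous (V:=R_CompleteNormedModule)). intros z Hz. apply Hc.
  assert (0 < Rmin x y) by (apply Rmin_pos; lra). lra.
Qed.

Lemma ex_gen_crit (f : R -> R) M :
  (forall x, 0 < x -> continuous f x) ->
  (forall x, 0 < x <= 1 -> Rabs (f x) <= M) ->
  (forall eps, 0 < eps -> exists B, 1 <= B /\
      forall b b', B <= b -> b <= b' -> Rabs (RInt f b b') <= eps) ->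
  ex_RInt_gen f (at_right 0) (Rbar_locally p_infty).
Proof.
  intros Hc HM HB.
  assert (Hex : forall x y, 0 < x -> 0 < y -> ex_RInt f x y)
    by (intros; apply ex_RInt_pos; auto).
  assert (HM0 : 0 <= M).
  { specialize (HM 1 ltac:(lra)). pose proof (Rabs_pos (f 1)). lra. }
  destruct (proj1 (filterlim_locally_cauchy (F := filter_prod (at_right 0) (Rbar_locally p_infty))
     (fun ab => RInt f (fst ab) (snd ab)))) as [y Hy].
  - intros eps.
    destruct (HB (eps / 3) ltac:(destruct eps; simpl; lra)) as [B [HB1 HB2]].
    set (A := Rmin 1 (eps / (3 * (M + 1)))).
    assert (HA0 : 0 < A).
    { apply Rmin_pos; [lra|]. destruct eps; simpl. apply Rdiv_lt_0_compat; lra. }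
    assert (HA1 : A <= 1) by apply Rmin_l.
    assert (HA2 : A * M <= eps / 3).
    { assert (A <= eps / (3 * (M + 1))) by apply Rmin_r.
      destruct eps as [e He]; simpl in *.
      apply Rle_trans with (r2 := e / (3 * (M+1)) * (M + 1)).
      - apply Rle_trans with (A * (M + 1)); [nra|]. apply Rmult_le_compat_r; lra.
      - right. field. lra. }
    exists (fun ab => 0 < fst ab < A /\ B < snd ab). split.
    + apply Filter_prod with (fun x => 0 < x < A) (fun x => B < x).
      * exists (mkposreal A HA0). intros z Hz Hz0. split; auto.
        unfold ball in Hz; simpl in Hz. unfold AbsRing_ball, abs, minus, plus, opp in Hz; simpl in Hz.
        apply Rabs_lt_between in Hz. lra.
      * exists B. auto.
      * intros x z Hx Hz; simpl; auto.
    + intros [a b] [a' b'] [[Ha1 Ha2] Hb] [[Ha1' Ha2'] Hb']; simpl in *.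
      change (Rabs (RInt f a' b' - RInt f a b) < eps).
      assert (E1 : RInt f a' b' = RInt f a' a + RInt f a b').
      { symmetry. apply (RInt_Chasles f a' a b'); apply Hex; lra. }
      assert (E2 : RInt f a b' = RInt f a b + RInt f b b').
      { symmetry. apply (RInt_Chasles f a b b'); apply Hex; lra. }
      rewrite E1, E2.
      replace (RInt f a' a + (RInt f a b + RInt f b b') - RInt f a b)
        with (RInt f a' a + RInt f b b') by ring.
      assert (I1 : Rabs (RInt f a' a) <= eps / 3).
      { assert (H := norm_RInt_le_const_abs f a' a (RInt f a' a) M).
        assert (Rabs (RInt f a' a) <= Rabs (a - a') * M).
        { apply H.
          - intros x Hx. apply HM.
            assert (Rmin a' a > 0) by (apply Rmin_pos; lra).
            assert (Rmax a' a < 1) by (apply Rmax_lub_lt; lra). lra.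
          - apply (RInt_correct (V:=R_CompleteNormedModule)). apply Hex; lra. }
        assert (Rabs (a - a') <= A) by (apply Rabs_le; lra).
        nra. }
      assert (I2 : Rabs (RInt f b b') <= eps / 3).
      { destruct (Rle_dec b b').
        - apply HB2; lra.
        - rewrite <- opp_RInt_swap by (apply Hex; lra).
          unfold opp; simpl. rewrite Rabs_Ropp. apply HB2; lra. }
      destruct eps; simpl in *.
      pose proof (Rabs_triang (RInt f a' a) (RInt f b b')). lra.
  - exists y. apply filterlimi_lim_ext_loc with (f := fun ab => RInt f (fst ab) (snd ab)).
    + apply Filter_prod with (fun x => 0 < x) (fun x => 0 < x).
      * exists (mkposreal 1 Rlt_0_1). intros; auto.
      * exists 0. auto.
      * intros x z Hx Hz. simpl. apply (RInt_correct (V:=R_CompleteNormedModule)). apply Hex; auto.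
    + exact Hy.
Qed.

Lemma exp_le' x y : x <= y -> exp x <= exp y.
Proof. intros [H|H]; [left; apply exp_increasing; auto | right; subst; auto]. Qed.

Definition E (m a b s : R) : R := exp (- m * ln s - a / s - b * s).

Lemma E_derive m a b s : 0 < s ->
  is_derive (E m a b) s (E m a b s * (- m / s + a / s ^ 2 - b)).
Proof.
  intros Hs. unfold E. auto_derive.
  - lra.
  - replace (- m * ln s + - (a * / s) + - (b * s)) with (- m * ln s - a / s - b * s)
      by (unfold Rdiv; ring). field. lra.
Qed.

Lemma E_cont m a b s : 0 < s -> continuous (E m a b) s.
Proof.
  intros Hs. apply (ex_derive_continuous (K:=R_AbsRing) (V:=R_NormedModule)). eexists. apply E_derive; auto.
Qed.

Lemma E_pos m a b s : 0 < E m a b s.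
Proof. apply exp_pos. Qed.

Lemma E_bound m a b s : 0 < m -> 0 < a -> 0 <= b -> 0 < s -> E m a b s <= exp (m ^ 2 / a).
Proof.
  intros Hm Ha Hb Hs. unfold E. apply exp_le'.
  set (w := ln (/ s) / 2).
  assert (Hw : ln s = - (2 * w)) by (unfold w; rewrite ln_Rinv; lra).
  assert (Hs' : / s = exp w * exp w).
  { rewrite <- exp_plus. replace (w + w) with (ln (/ s)) by (unfold w; lra).
    rewrite exp_ln; auto. apply Rinv_0_lt_compat; auto. }
  assert (Hwe : w <= exp w).
  { pose proof (exp_ineq1_le w). lra. }
  assert (Hbs : 0 <= b * s) by nra.
  replace (a / s) with (a * / s) by (unfold Rdiv; auto).
  rewrite Hw, Hs'.
  set (u := exp w) in *.
  assert (0 < u) by apply exp_pos.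
  apply Rle_trans with (2 * m * u - a * (u * u)); [assert (m * w <= m * u) by (apply Rmult_le_compat_l; lra); lra|].
  assert (0 <= (a * u - m) ^ 2) by apply pow2_ge_0.
  apply Rmult_le_reg_l with a; auto.
  replace (a * (m ^ 2 / a)) with (m ^ 2) by (field; lra). nra.
Qed.

Lemma tail_is_RInt m b b' : m <> 1 -> 0 < b -> b <= b' ->
  is_RInt (fun s => exp (- m * ln s)) b b'
    (exp ((1 - m) * ln b') / (1 - m) - exp ((1 - m) * ln b) / (1 - m)).
Proof.
  intros Hm Hb Hbb.
  apply (is_RInt_derive (V := R_CompleteNormedModule) (fun s => exp ((1 - m) * ln s) / (1 - m))).
  - intros x Hx. rewrite Rmin_left in Hx by lra. rewrite Rmax_right in Hx by lra.
    auto_derive. lra.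
    replace ((1 - m) * ln x) with (- m * ln x + ln x) by ring.
    rewrite exp_plus, exp_ln by lra. field. split; lra.
  - intros x Hx. rewrite Rmin_left in Hx by lra. rewrite Rmax_right in Hx by lra.
    apply (ex_derive_continuous (K:=R_AbsRing) (V:=R_NormedModule)). auto_derive. lra.
Qed.

Lemma E_ex m a b : 1 < m -> 0 < a -> 0 <= b ->
  ex_RInt_gen (E m a b) (at_right 0) (Rbar_locally p_infty).
Proof.
  intros Hm Ha Hb.
  apply ex_gen_crit with (M := exp (m ^ 2 / a)).
  - intros; apply E_cont; auto.
  - intros x Hx. rewrite Rabs_pos_eq by (left; apply E_pos).
    apply E_bound; lra.
  - intros eps Heps.
    set (L := ln (eps * (m - 1))).
    set (B := exp (Rmax 0 (L / (1 - m)))).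
    assert (HB1 : 1 <= B).
    { unfold B. rewrite <- exp_0. apply exp_le'. apply Rmax_l. }
    exists B. split; auto.
    intros b0 b' Hb0 Hbb.
    assert (Hint := tail_is_RInt m b0 b' ltac:(lra) ltac:(lra) Hbb).
    assert (Hle : norm (RInt (E m a b) b0 b') <=
       exp ((1 - m) * ln b') / (1 - m) - exp ((1 - m) * ln b0) / (1 - m)).
    { apply (norm_RInt_le (V := R_NormedModule) (E m a b) (fun s => exp (- m * ln s)) b0 b'); auto.
      - intros x Hx. unfold norm; simpl. unfold abs; simpl.
        rewrite Rabs_pos_eq by (left; apply E_pos). unfold E. apply exp_le'.
        assert (0 <= a / x) by (apply Rcomplements.Rdiv_le_0_compat; lra).
        assert (0 <= b * x) by nra. lra.
      - apply (RInt_correct (V:=R_CompleteNormedModule)).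
        apply ex_RInt_pos; try lra. intros; apply E_cont; auto. }
    unfold norm in Hle; simpl in Hle; unfold abs in Hle; simpl in Hle.
    eapply Rle_trans; [exact Hle|].
    assert (0 < exp ((1 - m) * ln b')) by apply exp_pos.
    assert (Hl : (1 - m) * ln b0 <= L).
    { assert (ln B <= ln b0) by (apply ln_le; lra).
      unfold B in H0. rewrite ln_exp in H0.
      assert (L / (1 - m) <= Rmax 0 (L / (1 - m))) by apply Rmax_r.
      assert ((1 - m) * (L / (1 - m)) = L) by (field; lra).
      nra. }
    assert (exp ((1 - m) * ln b0) <= eps * (m - 1)).
    { replace (eps * (m - 1)) with (exp L). apply exp_le'; auto.
      unfold L. rewrite exp_ln; auto. nra. }
    replace (exp ((1 - m) * ln b') / (1 - m) - exp ((1 - m) * ln b0) / (1 - m))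
      with ((exp ((1 - m) * ln b0) - exp ((1 - m) * ln b')) / (m - 1)) by (field; lra).
    apply Rmult_le_reg_l with (m - 1); [lra|].
    replace ((m - 1) * ((exp ((1 - m) * ln b0) - exp ((1 - m) * ln b')) / (m - 1)))
      with (exp ((1 - m) * ln b0) - exp ((1 - m) * ln b')) by (field; lra).
    nra.
Qed.


Definition H (m a b : R) : R := RInt_gen (E m a b) (at_right 0) (Rbar_locally p_infty).

Lemma exp_mvt y : exists c, Rabs c <= Rabs y /\ exp y - 1 = y * exp c.
Proof.
  destruct (Rtotal_order y 0) as [Hy|[Hy|Hy]].
  - destruct (MVT_cor2 exp exp y 0 Hy) as [c [Hc1 Hc2]].
    { intros; apply derivable_pt_lim_exp. }
    exists c. rewrite exp_0 in Hc1. split.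
    + rewrite !Rabs_left by lra. lra.
    + lra.
  - subst. exists 0. rewrite exp_0. split; [lra|ring].
  - destruct (MVT_cor2 exp exp 0 y Hy) as [c [Hc1 Hc2]].
    { intros; apply derivable_pt_lim_exp. }
    exists c. rewrite exp_0 in Hc1. split.
    + rewrite !Rabs_pos_eq by lra. lra.
    + lra.
Qed.

Lemma exp_taylor y : Rabs (exp y - 1 - y) <= y ^ 2 * exp (Rabs y).
Proof.
  destruct (exp_mvt y) as [c [Hc1 Hc2]].
  destruct (exp_mvt c) as [d [Hd1 Hd2]].
  replace (exp y - 1 - y) with (y * (c * exp d)) by (rewrite <- Hd2; lra).
  rewrite !Rabs_mult. rewrite (Rabs_pos_eq (exp d)) by (left; apply exp_pos).
  assert (exp d <= exp (Rabs y)).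
  { apply exp_le'. pose proof (Rle_abs d). lra. }
  assert (0 <= Rabs y) by apply Rabs_pos.
  assert (0 <= Rabs c) by apply Rabs_pos.
  assert (0 < exp d) by apply exp_pos.
  replace (y ^ 2) with (Rabs y * Rabs y) by (rewrite <- Rabs_mult; simpl; rewrite Rmult_1_r; apply Rabs_pos_eq; nra).
  apply Rle_trans with (Rabs y * (Rabs y * exp d)).
  - apply Rmult_le_compat_l; auto. apply Rmult_le_compat_r; lra.
  - rewrite <- Rmult_assoc. apply Rmult_le_compat_l; nra.
Qed.

Lemma E_pointwise m a b h s : 0 < s ->
  Rabs (E m (a + h) b s - E m a b s + h * E (m + 1) a b s)
    <= h ^ 2 * E (m + 2) (a - Rabs h) b s.
Proof.
  intros Hs.
  assert (E1 : E m (a + h) b s = E m a b s * exp (- h / s)).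
  { unfold E. rewrite <- exp_plus. f_equal. field. lra. }
  assert (E2 : E (m + 1) a b s = E m a b s * / s).
  { unfold E. rewrite <- (exp_ln (/ s)) by (apply Rinv_0_lt_compat; lra).
    rewrite <- exp_plus. rewrite ln_Rinv by lra. f_equal. ring. }
  assert (E3 : E (m + 2) (a - Rabs h) b s = E m a b s * (/ s) ^ 2 * exp (Rabs (- h / s))).
  { unfold E. replace ((/ s) ^ 2) with (/ s * / s) by ring.
    rewrite <- (exp_ln (/ s)) by (apply Rinv_0_lt_compat; lra).
    rewrite <- !exp_plus. rewrite ln_Rinv by lra. f_equal.
    unfold Rdiv. rewrite Rabs_mult, Rabs_Ropp, (Rabs_pos_eq (/ s)) by (left; apply Rinv_0_lt_compat; lra).
    field. lra. }
  rewrite E1, E2, E3.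
  replace (E m a b s * exp (- h / s) - E m a b s + h * (E m a b s * / s))
    with (E m a b s * (exp (- h / s) - 1 - (- h / s))) by (field; lra).
  rewrite Rabs_mult, Rabs_pos_eq by (left; apply E_pos).
  pose proof (exp_taylor (- h / s)).
  pose proof (E_pos m a b s).
  replace (h ^ 2 * (E m a b s * (/ s) ^ 2 * exp (Rabs (- h / s))))
    with (E m a b s * ((- h / s) ^ 2 * exp (Rabs (- h / s)))) by (field; lra).
  apply Rmult_le_compat_l; lra.
Qed.

Lemma H_correct m a b : 1 < m -> 0 < a -> 0 <= b ->
  is_RInt_gen (E m a b) (at_right 0) (Rbar_locally p_infty) (H m a b).
Proof.
  intros. apply (RInt_gen_correct (V := R_CompleteNormedModule)). apply E_ex; auto.
Qed.

Lemma filter_pos_le :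
  filter_prod (at_right 0) (Rbar_locally p_infty)
    (fun ab : R * R => 0 < fst ab /\ fst ab <= snd ab).
Proof.
  apply Filter_prod with (fun x => 0 < x < 1) (fun x => 1 < x).
  - exists (mkposreal 1 Rlt_0_1). intros z Hz Hz0. split; auto.
    unfold ball in Hz; simpl in Hz. unfold AbsRing_ball, abs, minus, plus, opp in Hz; simpl in Hz.
    apply Rabs_lt_between in Hz. lra.
  - exists 1. auto.
  - intros x y Hx Hy; simpl; lra.
Qed.

Lemma ev_pos (P : R * R -> Prop) :
  (forall ab : R * R, 0 < fst ab /\ fst ab <= snd ab -> P ab) ->
  filter_prod (at_right 0) (Rbar_locally p_infty) P.
Proof.
  intros HP. destruct filter_pos_le as [Q R0 HQ HR HQR].
  apply Filter_prod with Q R0; auto.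
Qed.

Lemma H_key m a b h : 1 < m -> 0 < a -> 0 <= b -> Rabs h <= a / 2 ->
  Rabs (H m (a + h) b - H m a b + h * H (m + 1) a b) <= h ^ 2 * H (m + 2) (a / 2) b.
Proof.
  intros Hm Ha Hb Hh.
  assert (Hah : 0 < a + h) by (pose proof (Rle_abs (-h)); rewrite Rabs_Ropp in *; lra).
  assert (I1 := H_correct m (a + h) b Hm Hah Hb).
  assert (I2 := H_correct m a b Hm Ha Hb).
  assert (I3 := H_correct (m + 1) a b ltac:(lra) Ha Hb).
  assert (I4 := H_correct (m + 2) (a / 2) b ltac:(lra) ltac:(lra) Hb).
  assert (J := is_RInt_gen_plus _ _ _ _ (is_RInt_gen_minus _ _ _ _ I1 I2)
                 (is_RInt_gen_scal _ h _ I3)).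
  assert (K := is_RInt_gen_scal _ (h ^ 2) _ I4).
  assert (Hpt : forall ab : R * R, 0 < fst ab /\ fst ab <= snd ab ->
     forall z, fst ab <= z <= snd ab ->
     Rabs (E m (a + h) b z - E m a b z + h * E (m + 1) a b z) <= h ^ 2 * E (m + 2) (a / 2) b z).
  { intros [x y] [Hx Hxy] z Hz; simpl in *.
    eapply Rle_trans. apply E_pointwise; lra.
    apply Rmult_le_compat_l. apply pow2_ge_0.
    unfold E. apply exp_le'.
    assert (a / 2 / z <= (a - Rabs h) / z).
    { unfold Rdiv. apply Rmult_le_compat_r. left; apply Rinv_0_lt_compat; lra. lra. }
    lra. }
  assert (Hn := Coquelicot.RInt_gen.RInt_gen_norm _ _ _ _
                  (filter_imp _ _ (fun ab (H0 : 0 < fst ab /\ fst ab <= snd ab) => proj2 H0) filter_pos_le)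
                  (filter_imp _ _ Hpt filter_pos_le) J K).
  exact Hn.
Qed.

Lemma H_derive m a b : 1 < m -> 0 < a -> 0 <= b ->
  is_derive (fun a' => H m a' b) a (- H (m + 1) a b).
Proof.
  intros Hm Ha Hb. apply is_derive_Reals. intros eps Heps.
  set (M := Rabs (H (m + 2) (a / 2) b) + 1).
  assert (HM : 0 < M) by (unfold M; pose proof (Rabs_pos (H (m + 2) (a / 2) b)); lra).
  assert (Hd : 0 < Rmin (a / 2) (eps / M)).
  { apply Rmin_pos; [lra|]. apply Rdiv_lt_0_compat; lra. }
  exists (mkposreal _ Hd). intros h Hh0 Hh; simpl in Hh.
  assert (Hh1 : Rabs h <= a / 2) by (pose proof (Rmin_l (a/2) (eps/M)); lra).
  assert (Hh2 : Rabs h < eps / M) by (pose proof (Rmin_r (a/2) (eps/M)); lra).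
  pose proof (H_key m a b h Hm Ha Hb Hh1) as K.
  assert (Hha : 0 < Rabs h) by (apply Rabs_pos_lt; auto).
  replace ((H m (a + h) b - H m a b) / h - - H (m + 1) a b)
    with ((H m (a + h) b - H m a b + h * H (m + 1) a b) / h) by (field; auto).
  unfold Rdiv. rewrite Rabs_mult, Rabs_inv.
  apply Rmult_lt_reg_r with (Rabs h); auto.
  rewrite Rmult_assoc, Rinv_l by lra. rewrite Rmult_1_r.
  eapply Rle_lt_trans; [exact K|].
  assert (h ^ 2 = Rabs h * Rabs h).
  { rewrite <- Rabs_mult. simpl. rewrite Rmult_1_r. rewrite Rabs_pos_eq; nra. }
  rewrite H0.
  assert (H (m + 2) (a / 2) b <= M) by (unfold M; pose proof (Rle_abs (H (m + 2) (a / 2) b)); lra).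
  assert (Rabs h * M < eps).
  { apply Rmult_lt_reg_r with (/ M). apply Rinv_0_lt_compat; auto.
    rewrite Rmult_assoc, Rinv_r by lra. rewrite Rmult_1_r. exact Hh2. }
  assert (Rabs h * Rabs h * H (m + 2) (a / 2) b <= Rabs h * Rabs h * M)
    by (apply Rmult_le_compat_l; nra).
  nra.
Qed.

Lemma E_succ m a b s : 0 < s -> E (m + 1) a b s = E m a b s * / s.
Proof.
  intros Hs. unfold E. rewrite <- (exp_ln (/ s)) by (apply Rinv_0_lt_compat; lra).
  rewrite <- exp_plus. rewrite ln_Rinv by lra. f_equal. ring.
Qed.

Lemma E_lim0 m a b : 0 < m -> 0 < a -> 0 <= b ->
  filterlim (E m a b) (at_right 0) (locally 0).
Proof.
  intros Hm Ha Hb. apply filterlim_locally. intros eps.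
  set (C := exp ((m + 1) ^ 2 / a)).
  assert (HC : 0 < C) by apply exp_pos.
  assert (Hd : 0 < Rmin 1 (eps / C)).
  { apply Rmin_pos; [lra|]. destruct eps; simpl; apply Rdiv_lt_0_compat; lra. }
  exists (mkposreal _ Hd). intros s Hs Hs0. simpl in Hs.
  unfold ball in Hs; simpl in Hs. unfold AbsRing_ball, abs, minus, plus, opp in Hs; simpl in Hs.
  change (Rabs (s + - 0) < Rmin 1 (eps / C)) in Hs. rewrite Ropp_0, Rplus_0_r, Rabs_pos_eq in Hs by lra.
  unfold ball; simpl. unfold AbsRing_ball, abs, minus, plus, opp; simpl.
  change (Rabs (E m a b s + - 0) < eps). rewrite Ropp_0, Rplus_0_r.
  rewrite Rabs_pos_eq by (left; apply E_pos).
  assert (Em : E m a b s = s * E (m + 1) a b s).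
  { rewrite E_succ by auto. field. lra. }
  assert (HB := E_bound (m + 1) a b s ltac:(lra) Ha Hb Hs0). fold C in HB.
  assert (Hs2 : s < eps / C) by (pose proof (Rmin_r 1 (eps / C)); lra).
  rewrite Em.
  apply Rle_lt_trans with (s * C). apply Rmult_le_compat_l; lra.
  apply Rmult_lt_reg_r with (/ C). apply Rinv_0_lt_compat; auto.
  rewrite Rmult_assoc, Rinv_r by lra. rewrite Rmult_1_r. exact Hs2.
Qed.

Lemma E_liminf m a b : 1 <= m -> 0 < a -> 0 <= b ->
  filterlim (E m a b) (Rbar_locally p_infty) (locally 0).
Proof.
  intros Hm Ha Hb. apply filterlim_locally. intros eps.
  exists (Rmax 1 (/ eps)). intros s Hs.
  assert (Hs1 : 1 < s) by (pose proof (Rmax_l 1 (/ eps)); lra).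
  assert (Hs2 : / eps < s) by (pose proof (Rmax_r 1 (/ eps)); lra).
  unfold ball; simpl. unfold AbsRing_ball, abs, minus, plus, opp; simpl.
  change (Rabs (E m a b s + - 0) < eps). rewrite Ropp_0, Rplus_0_r.
  rewrite Rabs_pos_eq by (left; apply E_pos).
  assert (HE : E m a b s <= / s).
  { rewrite <- (exp_ln s) at 2 by lra. rewrite <- exp_Ropp. unfold E. apply exp_le'.
    assert (0 < ln s) by (rewrite <- ln_1; apply ln_increasing; lra).
    assert (0 <= a / s) by (apply Rcomplements.Rdiv_le_0_compat; lra).
    assert (0 <= b * s) by nra. nra. }
  destruct eps as [e He]; simpl in *.
  assert (/ s < e).
  { rewrite <- (Rinv_inv e). apply Rinv_lt_contravar; auto.
    apply Rmult_lt_0_compat; [apply Rinv_0_lt_compat; auto | lra]. }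
  lra.
Qed.

Lemma H_ode m a b : 1 < m -> 0 < a -> 0 <= b ->
  a * H (m + 2) a b - m * H (m + 1) a b - b * H m a b = 0.
Proof.
  intros Hm Ha Hb.
  assert (Hd : forall s, 0 < s -> Derive (E m a b) s =
      - m * E (m + 1) a b s + a * E (m + 2) a b s - b * E m a b s).
  { intros s Hs. rewrite (is_derive_unique _ _ _ (E_derive m a b s Hs)).
    replace (m + 2) with ((m + 1) + 1) by ring. rewrite !E_succ by auto. field. lra. }
  assert (J0 : is_RInt_gen (Derive (E m a b)) (at_right 0) (Rbar_locally p_infty) (0 - 0)).
  { apply is_RInt_gen_Derive.
    - apply (filter_imp (fun ab : R * R => 0 < fst ab /\ fst ab <= snd ab)); [|exact filter_pos_le].
      intros [x y] [Hx Hxy] z Hz. simpl in *. rewrite Rmin_left in Hz by lra.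
      eexists; apply E_derive; lra.
    - apply (filter_imp (fun ab : R * R => 0 < fst ab /\ fst ab <= snd ab)); [|exact filter_pos_le].
      intros [x y] [Hx Hxy] z Hz. simpl in *. rewrite Rmin_left in Hz by lra.
      apply continuous_ext_loc with (fun s => - m * E (m + 1) a b s + a * E (m + 2) a b s - b * E m a b s).
      + assert (Hz0 : 0 < z) by lra. exists (mkposreal z Hz0). intros y0 Hy0.
        unfold ball in Hy0; simpl in Hy0. unfold AbsRing_ball, abs, minus, plus, opp in Hy0; simpl in Hy0.
        apply Rabs_lt_between in Hy0. symmetry. apply Hd. lra.
      + apply (ex_derive_continuous (K:=R_AbsRing) (V:=R_NormedModule)).
        unfold E. auto_derive. repeat split; lra.
    - apply E_lim0; lra.
    - apply E_liminf; lra. }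
  assert (J1 : is_RInt_gen (fun x => - m * E (m + 1) a b x + a * E (m + 2) a b x - b * E m a b x)
     (at_right 0) (Rbar_locally p_infty) (0 - 0)).
  { apply (is_RInt_gen_ext (Derive (E m a b))); [|exact J0].
    apply ev_pos. intros [x y] [Hx Hxy] z Hz; simpl in *. rewrite Rmin_left in Hz by lra. apply Hd; lra. }
  assert (I0 := H_correct m a b Hm Ha Hb).
  assert (I1 := H_correct (m + 1) a b ltac:(lra) Ha Hb).
  assert (I2 := H_correct (m + 2) a b ltac:(lra) Ha Hb).
  assert (J2 := is_RInt_gen_minus _ _ _ _ (is_RInt_gen_plus _ _ _ _ (is_RInt_gen_scal _ (- m) _ I1)
                 (is_RInt_gen_scal _ a _ I2)) (is_RInt_gen_scal _ b _ I0)).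
  assert (J3 : is_RInt_gen (fun x => - m * E (m + 1) a b x + a * E (m + 2) a b x - b * E m a b x)
     (at_right 0) (Rbar_locally p_infty)
     (- m * H (m + 1) a b + a * H (m + 2) a b - b * H m a b)) by exact J2.
  assert (U1 := is_RInt_gen_unique _ _ J1).
  assert (U2 := is_RInt_gen_unique _ _ J3).
  rewrite U1 in U2. lra.
Qed.


Definition Kc (g : R) : R := 2 * / Rpower 2 (g / 2) * / Gamma_fn (g / 2) * / sqrt (2 * PI).

Lemma integrand_eq g mu r t s : 0 < s ->
  p_bessel g r s * p_fpt mu s t =
  Kc g * Rpower r (g - 1) * t * exp (mu * t) * E ((g + 3) / 2) ((r ^ 2 + t ^ 2) / 2) (mu ^ 2 / 2) s.
Proof.
  intros Hs. unfold p_bessel, p_fpt, Kc, E.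
  rewrite <- Rpower_mult_distr by lra.
  rewrite sqrt_mult by (try apply pow_le; pose proof PI_RGT_0; lra).
  rewrite <- (Rpower_sqrt (s ^ 3)) by (apply pow_lt; lra).
  unfold Rdiv. rewrite !Rinv_mult.
  set (P2 := Rpower 2 (g * / 2)). set (G := Gamma_fn (g * / 2)). set (sq := sqrt (2 * PI)).
  set (R0 := Rpower r (g - 1)).
  unfold Rpower. rewrite ln_pow by lra. rewrite <- !exp_Ropp.
  transitivity (2 * / P2 * / G * / sq * R0 * t *
    (exp (- r ^ 2 * (/ 2 * / s)) * exp (- (g * / 2 * ln s)) *
     exp (- (t - mu * s) ^ 2 * (/ 2 * / s)) * exp (- (/ 2 * (INR 3 * ln s))))).
  - ring.
  - transitivity (2 * / P2 * / G * / sq * R0 * t * (exp (mu * t) *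
      exp (- ((g + 3) * / 2) * ln s - (r ^ 2 + t ^ 2) * / 2 * / s - mu ^ 2 * / 2 * s))); [|ring].
    rewrite <- !exp_plus. f_equal. f_equal. simpl INR. field. lra.
Qed.

Lemma q_repr g mu r t : 0 < g -> 0 < r -> 0 < t ->
  q_mu g mu r t = Kc g * Rpower r (g - 1) * t * exp (mu * t) *
     H ((g + 3) / 2) ((r ^ 2 + t ^ 2) / 2) (mu ^ 2 / 2).
Proof.
  intros Hg Hr Ht.
  assert (Ha : 0 < (r ^ 2 + t ^ 2) / 2) by (pose proof (pow2_ge_0 t); pose proof (pow_lt r 2 Hr); lra).
  assert (Hb : 0 <= mu ^ 2 / 2) by (pose proof (pow2_ge_0 mu); lra).
  assert (Hm : 1 < (g + 3) / 2) by lra.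
  assert (I := is_RInt_gen_scal _ (Kc g * Rpower r (g - 1) * t * exp (mu * t)) _
                 (H_correct ((g + 3) / 2) _ _ Hm Ha Hb)).
  assert (I2 : is_RInt_gen (fun s => p_bessel g r s * p_fpt mu s t) (at_right 0) (Rbar_locally p_infty)
     (Kc g * Rpower r (g - 1) * t * exp (mu * t) * H ((g + 3) / 2) ((r ^ 2 + t ^ 2) / 2) (mu ^ 2 / 2))).
  { apply (is_RInt_gen_ext (fun y => scal (Kc g * Rpower r (g - 1) * t * exp (mu * t))
        (E ((g + 3) / 2) ((r ^ 2 + t ^ 2) / 2) (mu ^ 2 / 2) y))); [|exact I].
    apply ev_pos. intros [x y] [Hx Hxy] z Hz; simpl in *. rewrite Rmin_left in Hz by lra.
    symmetry. rewrite integrand_eq by lra. reflexivity. }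
  unfold q_mu. apply (is_RInt_gen_unique _ _ I2).
Qed.


Definition K0 g mu r t := H ((g + 3) / 2) ((r ^ 2 + t ^ 2) / 2) (mu ^ 2 / 2).
Definition K1 g mu r t := H ((g + 3) / 2 + 1) ((r ^ 2 + t ^ 2) / 2) (mu ^ 2 / 2).
Definition K2 g mu r t := H ((g + 3) / 2 + 2) ((r ^ 2 + t ^ 2) / 2) (mu ^ 2 / 2).

Lemma Hd0 g mu a : 0 < g -> 0 < a ->
  is_derive (fun x => H ((g + 3) / 2) x (mu ^ 2 / 2)) a (- H ((g + 3) / 2 + 1) a (mu ^ 2 / 2)).
Proof.
  intros. apply H_derive; try lra. pose proof (pow2_ge_0 mu); lra.
Qed.

Lemma Hd1 g mu a : 0 < g -> 0 < a ->
  is_derive (fun x => H ((g + 3) / 2 + 1) x (mu ^ 2 / 2)) a (- H ((g + 3) / 2 + 2) a (mu ^ 2 / 2)).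
Proof.
  intros. replace ((g + 3) / 2 + 2) with ((g + 3) / 2 + 1 + 1) by ring.
  apply H_derive; try lra. pose proof (pow2_ge_0 mu); lra.
Qed.

Lemma apos r t : 0 < r -> 0 < (r ^ 2 + t ^ 2) / 2.
Proof. intros Hr. pose proof (pow2_ge_0 t); pose proof (pow_lt r 2 Hr); lra. Qed.

Lemma comp_gen (F u : R -> R) x dF du :
  is_derive F (u x) dF -> is_derive u x du -> is_derive (fun y => F (u y)) x (du * dF).
Proof.
  intros H1 H2. apply (is_derive_comp (K:=R_AbsRing) (V:=R_NormedModule) F u x dF du H1 H2).
Qed.

Lemma K0_dt g mu r t : 0 < g -> 0 < r ->
  is_derive (fun x => K0 g mu r x) t (- t * K1 g mu r t).
Proof.
  intros Hg Hr. unfold K0, K1.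
  replace (- t * H ((g + 3) / 2 + 1) ((r ^ 2 + t ^ 2) / 2) (mu ^ 2 / 2))
    with (t * (- H ((g + 3) / 2 + 1) ((r ^ 2 + t ^ 2) / 2) (mu ^ 2 / 2))) by ring.
  apply (comp_gen (fun a => H ((g + 3) / 2) a (mu ^ 2 / 2)) (fun y => (r ^ 2 + y ^ 2) / 2)).
  apply Hd0; auto. apply apos; auto.
  auto_derive. auto. field.
Qed.

Lemma K1_dt g mu r t : 0 < g -> 0 < r ->
  is_derive (fun x => K1 g mu r x) t (- t * K2 g mu r t).
Proof.
  intros Hg Hr. unfold K1, K2.
  replace (- t * H ((g + 3) / 2 + 2) ((r ^ 2 + t ^ 2) / 2) (mu ^ 2 / 2))
    with (t * (- H ((g + 3) / 2 + 2) ((r ^ 2 + t ^ 2) / 2) (mu ^ 2 / 2))) by ring.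
  apply (comp_gen (fun a => H ((g + 3) / 2 + 1) a (mu ^ 2 / 2)) (fun y => (r ^ 2 + y ^ 2) / 2)).
  apply Hd1; auto. apply apos; auto.
  auto_derive. auto. field.
Qed.

Lemma K0_dr g mu r t : 0 < g -> 0 < r ->
  is_derive (fun x => K0 g mu x t) r (- r * K1 g mu r t).
Proof.
  intros Hg Hr. unfold K0, K1.
  replace (- r * H ((g + 3) / 2 + 1) ((r ^ 2 + t ^ 2) / 2) (mu ^ 2 / 2))
    with (r * (- H ((g + 3) / 2 + 1) ((r ^ 2 + t ^ 2) / 2) (mu ^ 2 / 2))) by ring.
  apply (comp_gen (fun a => H ((g + 3) / 2) a (mu ^ 2 / 2)) (fun y => (y ^ 2 + t ^ 2) / 2)).
  apply Hd0; auto. apply apos; auto.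
  auto_derive. auto. field.
Qed.

Lemma K1_dr g mu r t : 0 < g -> 0 < r ->
  is_derive (fun x => K1 g mu x t) r (- r * K2 g mu r t).
Proof.
  intros Hg Hr. unfold K1, K2.
  replace (- r * H ((g + 3) / 2 + 2) ((r ^ 2 + t ^ 2) / 2) (mu ^ 2 / 2))
    with (r * (- H ((g + 3) / 2 + 2) ((r ^ 2 + t ^ 2) / 2) (mu ^ 2 / 2))) by ring.
  apply (comp_gen (fun a => H ((g + 3) / 2 + 1) a (mu ^ 2 / 2)) (fun y => (y ^ 2 + t ^ 2) / 2)).
  apply Hd1; auto. apply apos; auto.
  auto_derive. auto. field.
Qed.

Lemma K_ode g mu r t : 0 < g -> 0 < r ->
  (r ^ 2 + t ^ 2) / 2 * K2 g mu r t - (g + 3) / 2 * K1 g mu r t - mu ^ 2 / 2 * K0 g mu r t = 0.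
Proof.
  intros Hg Hr. unfold K0, K1, K2.
  apply H_ode. lra. apply apos; auto. pose proof (pow2_ge_0 mu); lra.
Qed.

Lemma loc_pos y : 0 < y -> locally y (fun z => 0 < z).
Proof.
  intros Hy. exists (mkposreal y Hy). intros z Hz.
  unfold ball in Hz; simpl in Hz. unfold AbsRing_ball, abs, minus, plus, opp in Hz; simpl in Hz.
  apply Rabs_lt_between in Hz. lra.
Qed.

Lemma my_d2 (f F1 F2 : R -> R) x : 0 < x ->
  (forall y, 0 < y -> is_derive f y (F1 y)) ->
  (forall y, 0 < y -> is_derive F1 y (F2 y)) ->
  ex_derive f x /\ ex_derive (fun y => Derive f y) x /\ Derive f x = F1 x /\
  Derive_n f 2 x = F2 x.
Proof.
  intros Hx H1 H2.
  assert (Loc : locally x (fun y => F1 y = Derive f y)).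
  { apply (filter_imp (fun y => 0 < y)); [|apply loc_pos; auto].
    intros y Hy. symmetry. apply is_derive_unique. auto. }
  split; [eexists; apply H1; auto|].
  split; [eexists; apply (is_derive_ext_loc F1); [exact Loc| apply H2; auto]|].
  split; [apply is_derive_unique; auto|].
  change (Derive (fun y => Derive (fun z => f z) y) x = F2 x).
  rewrite (Derive_ext_loc (fun y => Derive (fun z => f z) y) F1).
  - apply is_derive_unique; auto.
  - apply (filter_imp (fun y => F1 y = Derive f y)); [|exact Loc].
    intros y Hy; symmetry; exact Hy.
Qed.

Lemma my_d1 (f F1 : R -> R) x : 0 < x ->
  (forall y, 0 < y -> is_derive f y (F1 y)) ->
  ex_derive f x /\ Derive f x = F1 x.
Proof.
  intros Hx H1. split; [eexists; apply H1; auto| apply is_derive_unique; auto].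
Qed.


Lemma DK0t g mu r t : 0 < g -> 0 < r -> Derive (fun x : R => K0 g mu r x) t = - t * K1 g mu r t.
Proof. intros. apply is_derive_unique. apply K0_dt; auto. Qed.
Lemma DK1t g mu r t : 0 < g -> 0 < r -> Derive (fun x : R => K1 g mu r x) t = - t * K2 g mu r t.
Proof. intros. apply is_derive_unique. apply K1_dt; auto. Qed.
Lemma DK0r g mu r t : 0 < g -> 0 < r -> Derive (fun x : R => K0 g mu x t) r = - r * K1 g mu r t.
Proof. intros. apply is_derive_unique. apply K0_dr; auto. Qed.
Lemma DK1r g mu r t : 0 < g -> 0 < r -> Derive (fun x : R => K1 g mu x t) r = - r * K2 g mu r t.
Proof. intros. apply is_derive_unique. apply K1_dr; auto. Qed.

Definition Qt g mu r y := Kc g * Rpower r (g - 1) * exp (mu * y) *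
  ((1 + mu * y) * K0 g mu r y - y ^ 2 * K1 g mu r y).
Definition Q2t g mu r y := Kc g * Rpower r (g - 1) * exp (mu * y) *
  (mu * ((1 + mu * y) * K0 g mu r y - y ^ 2 * K1 g mu r y) + mu * K0 g mu r y
   + (1 + mu * y) * (- y * K1 g mu r y) - 2 * y * K1 g mu r y + y ^ 3 * K2 g mu r y).

Lemma dq_t g mu r y : 0 < g -> 0 < r -> 0 < y ->
  is_derive (fun t' => q_mu g mu r t') y (Qt g mu r y).
Proof.
  intros Hg Hr Hy.
  apply (is_derive_ext_loc (fun t' => Kc g * Rpower r (g - 1) * t' * exp (mu * t') * K0 g mu r t')).
  { apply (filter_imp (fun z => 0 < z)); [|apply loc_pos; auto].
    intros z Hz. symmetry. unfold K0. apply q_repr; auto. }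
  auto_derive.
  - eexists. apply K0_dt; auto.
  - rewrite DK0t by auto. unfold Qt. ring.
Qed.

Lemma dQt g mu r y : 0 < g -> 0 < r ->
  is_derive (Qt g mu r) y (Q2t g mu r y).
Proof.
  intros Hg Hr. unfold Qt.
  auto_derive.
  - split; [eexists; apply K0_dt; auto|]. split; [eexists; apply K1_dt; auto|]. auto.
  - rewrite DK0t by auto.
    rewrite DK1t by auto. unfold Q2t. ring.
Qed.

Definition Qr g mu t y := Kc g * t * exp (mu * t) * Rpower y (g - 1) *
  ((g - 1) / y * K0 g mu y t - y * K1 g mu y t).
Definition Q2r g mu t y := Kc g * t * exp (mu * t) * Rpower y (g - 1) *
  ((g - 1) / y * ((g - 1) / y * K0 g mu y t - y * K1 g mu y t)
   + (- (g - 1) / y ^ 2 * K0 g mu y t - (g - 1) * K1 g mu y t) - K1 g mu y t + y ^ 2 * K2 g mu y t).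
Definition Qq g mu t y := Kc g * t * exp (mu * t) * Rpower y (g - 1) *
  ((g - 2) / y ^ 2 * K0 g mu y t - K1 g mu y t).

Lemma dq_r g mu t y : 0 < g -> 0 < t -> 0 < y ->
  is_derive (fun r' => q_mu g mu r' t) y (Qr g mu t y).
Proof.
  intros Hg Ht Hy.
  apply (is_derive_ext_loc (fun r' => Kc g * exp ((g - 1) * ln r') * t * exp (mu * t) * K0 g mu r' t)).
  { apply (filter_imp (fun z => 0 < z)); [|apply loc_pos; auto].
    intros z Hz. symmetry. unfold K0. apply q_repr; auto. }
  auto_derive.
  - split; [lra|]. split; [eexists; apply K0_dr; auto|]. auto.
  - rewrite DK0r by auto. unfold Qr, Rpower. field. lra.
Qed.

Lemma dQr g mu t y : 0 < g -> 0 < y ->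
  is_derive (Qr g mu t) y (Q2r g mu t y).
Proof.
  intros Hg Hy. unfold Qr, Rpower.
  auto_derive.
  - split; [lra|]. split; [lra|]. split; [eexists; apply K0_dr; auto|]. split; [eexists; apply K1_dr; auto|]. auto.
  - rewrite DK0r by auto.
    rewrite DK1r by auto. unfold Q2r, Rpower. field. lra.
Qed.

Lemma dqq g mu t y : 0 < g -> 0 < t -> 0 < y ->
  is_derive (fun r' => q_mu g mu r' t / r') y (Qq g mu t y).
Proof.
  intros Hg Ht Hy.
  apply (is_derive_ext_loc (fun r' => Kc g * exp ((g - 1) * ln r') * t * exp (mu * t) * K0 g mu r' t / r')).
  { apply (filter_imp (fun z => 0 < z)); [|apply loc_pos; auto].
    intros z Hz. symmetry. unfold K0. rewrite q_repr; auto. }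
  auto_derive.
  - split; [lra|]. split; [eexists; apply K0_dr; auto|]. split; [lra|]. auto.
  - rewrite DK0r by auto. unfold Qq, Rpower. field. lra.
Qed.

Theorem mainTheorem11 (g mu r t : R) (hg : 0 < g) (hmu : 0 <= mu)
  (hr : 0 < r) (ht : 0 < t) :
  ex_derive (fun t' => q_mu g mu r t') t /\
  ex_derive (fun t' => Derive (fun t'' => q_mu g mu r t'') t') t /\
  ex_derive (fun r' => q_mu g mu r' t) r /\
  ex_derive (fun r' => Derive (fun r'' => q_mu g mu r'' t) r') r /\
  ex_derive (fun r' => q_mu g mu r' t / r') r /\
  2 * mu * Derive (fun t' => q_mu g mu r t') t
    - Derive_n (fun t' => q_mu g mu r t') 2 t
  = Derive_n (fun r' => q_mu g mu r' t) 2 r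
    - (g - 1) * Derive (fun r' => q_mu g mu r' t / r') r.
Proof.
  destruct (my_d2 (fun t' => q_mu g mu r t') (Qt g mu r) (Q2t g mu r) t ht
     (fun y Hy => dq_t g mu r y hg hr Hy) (fun y Hy => dQt g mu r y hg hr)) as [T1 [T2 [T3 T4]]].
  destruct (my_d2 (fun r' => q_mu g mu r' t) (Qr g mu t) (Q2r g mu t) r hr
     (fun y Hy => dq_r g mu t y hg ht Hy) (fun y Hy => dQr g mu t y hg Hy)) as [R1 [R2 [R3 R4]]].
  destruct (my_d1 (fun r' => q_mu g mu r' t / r') (Qq g mu t) r hr
     (fun y Hy => dqq g mu t y hg ht Hy)) as [S1 S2].
  split; [exact T1|]. split; [exact T2|]. split; [exact R1|]. split; [exact R2|].
  split; [exact S1|].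
  rewrite T3, T4, R4, S2.
  unfold Qt, Q2t, Q2r, Qq.
  assert (Ha := apos r t hr).
  assert (HK := K_ode g mu r t hg hr).
  assert (HK2 : K2 g mu r t = ((g + 3) / 2 * K1 g mu r t + mu ^ 2 / 2 * K0 g mu r t) / ((r ^ 2 + t ^ 2) / 2)).
  { field_simplify_eq; [|lra]. lra. }
  rewrite HK2. field. split; lra.
Qed.
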